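(* Define $F=(n_F)_{n\ge0}$ by $0_F=1$ and, for $n\ge1$, $n_F=a_n b_n$ where $a_n=2$ if $n$ is even and $a_n=1$ if $n$ is odd, and $b_n=3$ if $3\mid n$ and $b_n=1$ otherwise (so $F=1;\,1,2,3,2,1,6,1,2,3,\dots$ listing from $n=0$). Then $F$ is cobweb-admissible, but the layer $\langle\Phi_5\to\Phi_7\rangle$ of its cobweb poset (whose levels have $1,6,1$ vertices) admits no tiling by blocks of type $\sigma P_3$. Consequently, not every cobweb-admissible sequence is a cobweb tiling sequence.
   Context: Notation: $n_F\equiv F_n$. A sequence $F=(n_F)_{n\ge0}$ of natural numbers with $0_F=1$ is cobweb-admissible iff every $F$-nomial coefficient $\binom{n}{k}_F=\frac{n_F(n-1)_F\cdots(n-k+1)_F}{1_F2_F\cdots k_F}$, $0\le k\le n$, is a nonnegative integer. The cobweb poset of $F$ has, for each $s\ge1$, a level $\Phi_s$ consisting of $s_F$ distinct vertices (levels pairwise disjoint), plus a root level $\Phi_0$ with one vertex; for $x\in\Phi_i$, $y\in\Phi_j$ one has $x<y$ iff $i<j$. For $1\le a\le b$, the layer $\langle\Phi_a\to\Phi_b\rangle$ is the subposet on $\Phi_a\cup\dots\cup\Phi_b$; it has $m=b-a+1$ levels and its maximal chains form the set $\Phi_a\times\dots\times\Phi_b$. For a permutation $\sigma$ of $\{1,\dots,m\}$, a block of type $\sigma P_m$ in this layer is the subposet induced on $V_a\cup\dots\cup V_b$ where $V_{a-1+i}\subseteq\Phi_{a-1+i}$ and $|V_{a-1+i}|=\sigma(i)_F$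 for $i=1,\dots,m$; its maximal chains form the set $V_a\times\dots\times V_b$. A tiling of the layer is a finite family of such blocks ($\sigma$ may vary from block to block) whose sets $V_a\times\dots\times V_b$ partition $\Phi_a\times\dots\times\Phi_b$ (pairwise max-disjoint and covering all maximal chains). A cobweb tiling sequence is a cobweb-admissible sequence $F$ such that for all $1\le a\le b$ the layer $\langle\Phi_a\to\Phi_b\rangle$ admits a tiling by blocks of type $\sigma P_{b-a+1}$. *)

(* Defs.v *)
From mathcomp Require Import all_boot all_order all_fingroup.
Set Implicit Arguments. Unset Strict Implicit. Unset Printing Implicit Defensive.

Definition fnum (F : nat -> nat) (n k : nat) : nat :=
  \prod_(n.+1 - k <= i < n.+1) F i.
Definition fden (F : nat -> nat) (k : nat) : nat :=
  \prod_(1 <= i < k.+1) F i.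

(* cobweb-admissible: 0_F = 1 and every F-nomial coefficient is a
   nonnegative integer (denominator nonzero and divides the numerator) *)
Definition cobweb_admissible (F : nat -> nat) : Prop :=
  F 0 = 1 /\
  forall n k, k <= n -> 0 < fden F k /\ fden F k %| fnum F n k.

(* Layer <Phi_a -> Phi_(a+m-1)>: level a+i (i : 'I_m) is 'I_(F (a+i)).
   A maximal chain picks one vertex on each level. *)
Definition layer_chain (F : nat -> nat) (a m : nat) : Type :=
  forall i : 'I_m, 'I_(F (a + i)).

Definition layer_subsets (F : nat -> nat) (a m : nat) : Type :=
  forall i : 'I_m, {set 'I_(F (a + i))}.

(* block of type sigma P_m: |V_(a-1+i)| = sigma(i)_F for i = 1..m;
   with 0-based i : 'I_m this reads #|V (a+i)| = F ((sigma i) + 1). *)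
Definition is_block (F : nat -> nat) (a m : nat) (s : {perm 'I_m})
    (V : layer_subsets F a m) : Prop :=
  forall i : 'I_m, #|V i| = F (s i).+1.

Definition chain_in_block (F : nat -> nat) (a m : nat)
    (V : layer_subsets F a m) (c : layer_chain F a m) : Prop :=
  forall i : 'I_m, c i \in V i.

Definition layer_tileable (F : nat -> nat) (a b : nat) : Prop :=
  exists (k : nat) (sig : 'I_k -> {perm 'I_(b - a).+1})
         (V : 'I_k -> layer_subsets F a (b - a).+1),
    (forall j, is_block (sig j) (V j)) /\
    (forall c : layer_chain F a (b - a).+1,
        exists! j : 'I_k, chain_in_block (V j) c).

Definition cobweb_tiling_sequence (F : nat -> nat) : Prop :=
  cobweb_admissible F /\
  forall a b, 1 <= a -> a <= b -> layer_tileable F a b.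

Definition Fex (n : nat) : nat :=
  if n == 0 then 1
  else (if odd n then 1 else 2) * (if 3 %| n then 3 else 1).

(* Main.v *)
Require Import Defs.
From mathcomp Require Import all_boot all_order all_fingroup.
Set Implicit Arguments. Unset Strict Implicit. Unset Printing Implicit Defensive.

Definition fi (p q i : nat) := if p %| i then q else 1.

Lemma prod_fi p q n : 0 < p ->
  \prod_(1 <= i < n.+1) fi p q i = q ^ (n %/ p).
Proof.
move=> p0; elim: n => [|n IH]; first by rewrite big_geq // div0n.
rewrite big_nat_recr //= IH divnS // /fi; case: (p %| n.+1) => /=.
  by rewrite expnS mulnC.
by rewrite muln1.
Qed.

Lemma dvd_fi p q n k : 0 < p -> 0 < q -> k <= n ->
  \prod_(1 <= i < k.+1) fi p q i %| \prod_(n.+1 - k <= i < n.+1) fi p q i.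
Proof.
move=> p0 q0 kn.
have e : \prod_(1 <= i < n.+1) fi p q i =
   \prod_(1 <= i < (n - k).+1) fi p q i * \prod_(n.+1 - k <= i < n.+1) fi p q i.
  rewrite -subSn // -big_cat_nat //; first by rewrite subSn.
  by rewrite leq_subr.
rewrite !prod_fi // in e.
have le : (n - k) %/ p + k %/ p <= n %/ p.
  by rewrite -{2}(subnK kn) divnD // leq_addr.
rewrite prod_fi // -(@dvdn_pmul2l (q ^ ((n - k) %/ p))) ?expn_gt0 ?q0 //.
by rewrite -e -expnD dvdn_exp2l.
Qed.

Lemma Fex_split i : 0 < i -> Fex i = fi 2 2 i * fi 3 3 i.
Proof.
rewrite /Fex /fi dvdn2; case: i => // i _.
by case: (odd i.+1).
Qed.

Lemma split_prod m n : 0 < m ->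
  \prod_(m <= i < n) Fex i = \prod_(m <= i < n) fi 2 2 i * \prod_(m <= i < n) fi 3 3 i.
Proof.
move=> m0; rewrite -big_split /=; apply: eq_big_nat => i /andP [mi _].
by apply: Fex_split; apply: leq_trans mi.
Qed.

Lemma adm : cobweb_admissible Fex.
Proof.
split=> // n k kn; rewrite /fden /fnum.
have h : 0 < n.+1 - k by rewrite subSn.
rewrite !split_prod //; split.
  by rewrite prod_fi // prod_fi // muln_gt0 !expn_gt0.
by apply: dvdn_mul; apply: dvd_fi.
Qed.

Lemma Fex_pos n : 0 < Fex n.
Proof. rewrite /Fex; case: (n == 0) => //; rewrite muln_gt0; case: odd; case: (3 %| n) => //. Qed.

Lemma small (s : 'I_3) : Fex (s.+1) <= 1 -> val s = 0.
Proof. by case: s => [[|[|[|]]]]. Qed.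

Lemma not_tile : ~ layer_tileable Fex 5 7.
Proof.
case=> k [sig [V [Hb Hc]]].
pose c : layer_chain Fex 5 (7 - 5).+1 := fun i => Ordinal (Fex_pos (5 + i)).
have [j [_ _]] := Hc c.
have H := Hb j.
have h0 := H ord0.
have h2 := H ord_max.
have c0 : #|V j ord0| <= 1.
  by apply: leq_trans (max_card _) _; rewrite card_ord.
have c2 : #|V j ord_max| <= 1.
  by apply: leq_trans (max_card _) _; rewrite card_ord.
rewrite h0 in c0; rewrite h2 in c2.
have e : sig j ord0 = sig j ord_max.
  by apply: val_inj; rewrite (small c0) (small c2).
by have := perm_inj e.
Qed.

Theorem theorem3 :
  cobweb_admissible Fex /\
  ~ layer_tileable Fex 5 7 /\
  (exists F : nat -> nat, cobweb_admissible F /\ ~ cobweb_tiling_sequence F).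
Proof.
split; first exact: adm.
split; first exact: not_tile.
exists Fex; split; first exact: adm.
by case=> _ H; apply: not_tile; apply: H.
Qed.
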